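(* Let $S,T$ be two symmetric scoring functions on $\mathcal{A}^*\times\mathcal{A}^*$. If $\max_{(x,y)\in\mathrm{SET}_{S,T}}x$ has a unique maximiser $(x_0,y_0)$, then $$\max_{\pi\in\nu^*_{n,S}}\frac{T_\pi(X_{[1,n]},Y_{[1,n]})}{n}\to y_0\quad\text{and}\quad\min_{\pi\in\nu^*_{n,S}}\frac{T_\pi(X_{[1,n]},Y_{[1,n]})}{n}\to y_0\quad\text{almost surely as }n\to\infty.$$
   Context: $\mathcal{A}$ finite alphabet, $\mathcal{A}^*=\mathcal{A}\cup\{G\}$ with gap symbol $G$. A symmetric scoring function is $R:\mathcal{A}^*\times\mathcal{A}^*\to\mathbb{R}$ with $R(a,b)=R(b,a)$, $R(G,G)=0$. An alignment of $x_{[1,n]},y_{[1,n]}$ is a pair of increasing sequences $1\le i_1<\dots<i_k\le n$, $1\le j_1<\dots<j_k\le n$; $\Lambda_n$ is the set of them; its score is $R_\nu(x_{[1,n]},y_{[1,n]})=\sum_{\ell}R(x_{i_\ell},y_{j_\ell})+\sum_{i\notin\{i_\ell\}}R(x_i,G)+\sum_{j\notin\{j_\ell\}}R(G,y_j)$. $X_1,X_2,\dots,Y_1,Y_2,\dots$ are i.i.d. random letters from a fixed distribution on $\mathcal{A}$; $L_{n,R}=\max_{\nu\in\Lambda_n}R_\nu(X_{[1,n]},Y_{[1,n]})$, and $\nu^*_{n,R}$ is the random set of $\nu\in\Lambda_n$ attaining this maximum; $\lambda_R$ is the a.s. limit of $L_{n,R}/n$. $\mathrm{SET}_{S,T}=\{(x,y):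 ax+by\le\lambda_{aS+bT}\ \forall(a,b)\in\mathbb{R}^2\}$, the a.s. Hausdorff limit of the closed convex hulls of $\{(S_\nu/n,T_\nu/n):\nu\in\Lambda_n\}$. *)

(* Defs.v *)
From Stdlib Require Import Reals List Arith.
Import ListNotations.
Open Scope R_scope.

(* A^* = option A, with None playing the role of the gap symbol G. *)
Definition scoring (A : Type) := option A -> option A -> R.

Definition symmetric_scoring {A : Type} (Rs : scoring A) : Prop :=
  (forall u v, Rs u v = Rs v u) /\ Rs None None = 0.

Definition finite_alphabet {A : Type} (enumA : list A) : Prop :=
  NoDup enumA /\ forall a, In a enumA.

Definition sumR (l : list R) : R := fold_right Rplus 0 l.
Definition prodR (l : list R) : R := fold_right Rmult 1 l.

(* An alignment (i_1,j_1),...,(i_k,j_k) with 1<=i_1<...<i_k<=n, 1<=j_1<...<j_k<=n. *)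
Definition alignment := list (nat * nat).

Fixpoint sublists {T : Type} (l : list T) : list (list T) :=
  match l with
  | [] => [[]]
  | h :: t => let s := sublists t in map (cons h) s ++ s
  end.

Fixpoint increasing_pairs (nu : alignment) : bool :=
  match nu with
  | [] => true
  | (i, j) :: t =>
      match t with
      | [] => true
      | (i', j') :: _ => Nat.ltb i i' && Nat.ltb j j' && increasing_pairs t
      end
  end.

Definition all_pairs (n : nat) : list (nat * nat) :=
  flat_map (fun i => map (fun j => (i, j)) (seq 1 n)) (seq 1 n).

Definition alignments (n : nat) : list alignment :=
  filter increasing_pairs (sublists (all_pairs n)).

Definition score {A : Type} (Rs : scoring A) (n : nat) (x y : nat -> A)
    (nu : alignment) : R :=
  sumR (map (fun ij => Rs (Some (x (fst ij))) (Some (y (snd ij)))) nu)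
  + sumR (map (fun i => if existsb (Nat.eqb i) (map fst nu) then 0
                        else Rs (Some (x i)) None) (seq 1 n))
  + sumR (map (fun j => if existsb (Nat.eqb j) (map snd nu) then 0
                        else Rs None (Some (y j))) (seq 1 n)).

Definition list_max (l : list R) : R :=
  match l with [] => 0 | h :: t => fold_right Rmax h t end.
Definition list_min (l : list R) : R :=
  match l with [] => 0 | h :: t => fold_right Rmin h t end.

Definition L_opt {A : Type} (Rs : scoring A) (n : nat) (x y : nat -> A) : R :=
  list_max (map (score Rs n x y) (alignments n)).

Definition opt_alignments {A : Type} (Rs : scoring A) (n : nat) (x y : nat -> A)
    : list alignment :=
  filter (fun nu => if Req_EM_T (score Rs n x y nu) (L_opt Rs n x y) then true else false)
         (alignments n).

Definition max_T_over_opt {A : Type} (S T : scoring A) (n : nat) (x y : nat -> A) : R :=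
  list_max (map (fun pi => score T n x y pi / INR n) (opt_alignments S n x y)).
Definition min_T_over_opt {A : Type} (S T : scoring A) (n : nat) (x y : nat -> A) : R :=
  list_min (map (fun pi => score T n x y pi / INR n) (opt_alignments S n x y)).

Definition sigma_algebra {Omega : Type} (F : (Omega -> Prop) -> Prop) : Prop :=
  F (fun _ => True)
  /\ (forall E, F E -> F (fun w => ~ E w))
  /\ (forall E : nat -> Omega -> Prop, (forall k, F (E k)) ->
        F (fun w => exists k, E k w)).

Definition probability_measure {Omega : Type} (F : (Omega -> Prop) -> Prop)
    (P : (Omega -> Prop) -> R) : Prop :=
  (forall E, F E -> 0 <= P E)
  /\ P (fun _ => True) = 1
  /\ (forall E : nat -> Omega -> Prop,
        (forall k, F (E k)) ->
        (forall k l w, k <> l -> E k w -> E l w -> False) ->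
        Un_cv (fun N => sum_f_R0 (fun k => P (E k)) N) (P (fun w => exists k, E k w))).

Definition almost_surely {Omega : Type} (F : (Omega -> Prop) -> Prop)
    (P : (Omega -> Prop) -> R) (Q : Omega -> Prop) : Prop :=
  exists E, F E /\ P E = 1 /\ forall w, E w -> Q w.

Definition distribution {A : Type} (enumA : list A) (p : A -> R) : Prop :=
  (forall a, 0 <= p a) /\ sumR (map p enumA) = 1.

(* X_1, X_2, ..., Y_1, Y_2, ... are i.i.d. with law p (index 0 unused):
   the events {X_i = a} are measurable and every finite-dimensional
   distribution is the product one. *)
Definition iid_letters {A Omega : Type} (F : (Omega -> Prop) -> Prop)
    (P : (Omega -> Prop) -> R) (p : A -> R) (X Y : nat -> Omega -> A) : Prop :=
  (forall i a, F (fun w => X i w = a))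
  /\ (forall i a, F (fun w => Y i w = a))
  /\ (forall (n : nat) (a b : nat -> A),
        P (fun w => forall i, (1 <= i <= n)%nat -> X i w = a i /\ Y i w = b i)
        = prodR (map (fun i => p (a i) * p (b i)) (seq 1 n))).

Definition is_lambda {A Omega : Type} (F : (Omega -> Prop) -> Prop)
    (P : (Omega -> Prop) -> R) (X Y : nat -> Omega -> A) (lam : scoring A -> R) : Prop :=
  forall Rs : scoring A, symmetric_scoring Rs ->
    almost_surely F P (fun w =>
      Un_cv (fun n => L_opt Rs n (fun i => X i w) (fun i => Y i w) / INR n) (lam Rs)).

Definition SET {A : Type} (lam : scoring A -> R) (S T : scoring A) (x y : R) : Prop :=
  forall a b : R, a * x + b * y <= lam (fun u v => a * S u v + b * T u v).

(* Main.v *)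
Require Import Defs.
From Stdlib Require Import Reals List Lra Lia Classical FunctionalExtensionality PropExtensionality ClassicalEpsilon.
Import ListNotations.
Import Defs.
Open Scope R_scope.

Lemma pred_ext {Omega : Type} (E E' : Omega -> Prop) :
  (forall w, E w <-> E' w) -> E = E'.
Proof. intros H; apply functional_extensionality; intro w; apply propositional_extensionality; auto. Qed.

Lemma cv_const (c : R) : Un_cv (fun _ => c) c.
Proof. intros e He; exists 0%nat; intros; unfold Rdist; rewrite Rminus_diag, Rabs_R0; lra. Qed.

Lemma cv_ev (u : nat -> R) (c : R) (N : nat) :
  (forall n, (N <= n)%nat -> u n = c) -> Un_cv u c.
Proof. intros H e He; exists N; intros n Hn; rewrite H by lia; unfold Rdist; rewrite Rminus_diag, Rabs_R0; lra. Qed.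


Lemma F_ext {Omega : Type} (F : (Omega -> Prop) -> Prop) (E E' : Omega -> Prop) :
  F E -> (forall w, E w <-> E' w) -> F E'.
Proof. intros H1 H2; rewrite <- (pred_ext E E' H2); auto. Qed.

Lemma P_ext {Omega : Type} (P : (Omega -> Prop) -> R) (E E' : Omega -> Prop) :
  (forall w, E w <-> E' w) -> P E = P E'.
Proof. intros H2; rewrite (pred_ext E E' H2); auto. Qed.

Lemma F_false {Omega : Type} (F : (Omega -> Prop) -> Prop) :
  sigma_algebra F -> F (fun _ : Omega => False).
Proof. intros [H1 [H2 H3]]. apply (F_ext F (fun w => ~ True)); [apply H2; auto| tauto]. Qed.

Lemma F_or {Omega : Type} (F : (Omega -> Prop) -> Prop) (A B : Omega -> Prop) :
  sigma_algebra F -> F A -> F B -> F (fun w => A w \/ B w).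
Proof.
  intros HF HA HB. destruct HF as [H1 [H2 H3]].
  apply (F_ext F (fun w => exists k, (fun k => if Nat.eqb k 0 then A else B) k w)).
  - apply H3. intros k; destruct (Nat.eqb k 0); auto.
  - intros w; split.
    + intros [k Hk]; destruct (Nat.eqb k 0); auto.
    + intros [Ha|Hb]; [exists 0%nat; simpl; auto | exists 1%nat; simpl; auto].
Qed.

Lemma F_and {Omega : Type} (F : (Omega -> Prop) -> Prop) (A B : Omega -> Prop) :
  sigma_algebra F -> F A -> F B -> F (fun w => A w /\ B w).
Proof.
  intros HF HA HB. pose proof HF as [H1 [H2 H3]].
  apply (F_ext F (fun w => ~ (~ A w \/ ~ B w))).
  - apply H2. apply F_or; auto.
  - intros w; tauto.
Qed.

Lemma P_false {Omega : Type} (F : (Omega -> Prop) -> Prop) (P : (Omega -> Prop) -> R) :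
  sigma_algebra F -> probability_measure F P -> P (fun _ => False) = 0.
Proof.
  intros HF [HP1 [HP2 HP3]].
  set (c := P (fun _ => False)).
  assert (Hc := HP3 (fun _ _ => False) (fun _ => F_false F HF) (fun _ _ _ _ H _ => H)).
  rewrite (P_ext P _ (fun _ => False)) in Hc by (intros; split; [intros [_ h]; auto| tauto]).
  fold c in Hc.
  assert (Hs : forall N, sum_f_R0 (fun _ => c) N = INR (S N) * c).
  { induction N; simpl sum_f_R0. simpl; ring. rewrite IHN. rewrite (S_INR (S N)). ring. }
  assert (H2 : Un_cv (fun N => sum_f_R0 (fun _ => c) (S N) - sum_f_R0 (fun _ => c) N) (c - c)).
  { apply CV_minus; auto. intros e He; destruct (Hc e He) as [N HN]; exists N; intros n Hn; apply HN; lia. }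
  assert (H3 : Un_cv (fun N => sum_f_R0 (fun _ => c) (S N) - sum_f_R0 (fun _ => c) N) c).
  { apply cv_ev with 0%nat. intros n _. simpl. ring. }
  pose proof (UL_sequence _ _ _ H2 H3). lra.
Qed.

Lemma P_add2 {Omega : Type} (F : (Omega -> Prop) -> Prop) (P : (Omega -> Prop) -> R) (A B : Omega -> Prop) :
  sigma_algebra F -> probability_measure F P -> F A -> F B -> (forall w, A w -> B w -> False) ->
  P (fun w => A w \/ B w) = P A + P B.
Proof.
  intros HF HP HA HB Hd. pose proof (P_false F P HF HP) as H0.
  destruct HP as [HP1 [HP2 HP3]].
  set (E := fun k : nat => match k with 0%nat => A | 1%nat => B | _ => fun _ => False end).
  assert (HE : forall k, F (E k)). { intros [|[|k]]; simpl; auto. apply F_false; auto. }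
  assert (HD : forall k l w, k <> l -> E k w -> E l w -> False).
  { intros [|[|k]] [|[|l]] w Hkl; simpl; try tauto; try lia; eauto. }
  pose proof (HP3 E HE HD) as Hc.
  rewrite (P_ext P (fun w => exists k, E k w) (fun w => A w \/ B w)) in Hc.
  2:{ intros w; split. intros [[|[|k]] h]; simpl in h; tauto.
      intros [h|h]; [exists 0%nat|exists 1%nat]; simpl; auto. }
  assert (Hc2 : Un_cv (fun N => sum_f_R0 (fun k => P (E k)) N) (P A + P B)).
  { apply cv_ev with 1%nat. intros n Hn. induction n. lia.
    destruct n. simpl. ring. simpl sum_f_R0 in *. rewrite IHn by lia. simpl. rewrite H0. ring. }
  eapply UL_sequence; eauto.
Qed.

Lemma P_compl {Omega : Type} (F : (Omega -> Prop) -> Prop) (P : (Omega -> Prop) -> R) (A : Omega -> Prop) :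
  sigma_algebra F -> probability_measure F P -> F A -> P (fun w => ~ A w) = 1 - P A.
Proof.
  intros HF HP HA. pose proof HF as [H1 [H2 H3]].
  pose proof (P_add2 F P A (fun w => ~ A w) HF HP HA (H2 _ HA) (fun w a b => b a)).
  rewrite (P_ext P _ (fun _ => True)) in H by (intros; split; auto; intros; apply classic).
  destruct HP as [_ [HT _]]. lra.
Qed.

Lemma P_mono {Omega : Type} (F : (Omega -> Prop) -> Prop) (P : (Omega -> Prop) -> R) (A B : Omega -> Prop) :
  sigma_algebra F -> probability_measure F P -> F A -> F B -> (forall w, A w -> B w) -> P A <= P B.
Proof.
  intros HF HP HA HB Hs. pose proof HF as [H1 [H2 H3]].
  pose proof (P_add2 F P A (fun w => B w /\ ~ A w) HF HP HA (F_and F _ _ HF HB (H2 _ HA)) (fun w a b => proj2 b a)).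
  rewrite (P_ext P _ B) in H.
  2:{ intros w; split. intros [h|[h _]]; auto. intros h; destruct (classic (A w)); auto. }
  pose proof HP as [HP1 _]. pose proof (HP1 _ (F_and F _ _ HF HB (H2 _ HA))). lra.
Qed.

Lemma as_forall {Omega : Type} (F : (Omega -> Prop) -> Prop) (P : (Omega -> Prop) -> R) (Q : nat -> Omega -> Prop) :
  sigma_algebra F -> probability_measure F P -> (forall k, almost_surely F P (Q k)) ->
  almost_surely F P (fun w => forall k, Q k w).
Proof.
  intros HF HP HQ.
  set (E := fun k => proj1_sig (constructive_indefinite_description _ (HQ k))).
  assert (HE : forall k, F (E k) /\ P (E k) = 1 /\ forall w, E k w -> Q k w).
  { intros k; unfold E; destruct (constructive_indefinite_description _ (HQ k)); auto. }
  clearbody E.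
  pose proof HF as [H1 [H2 H3]].
  set (G := fix G k := match k with 0%nat => fun _ : Omega => True | S k => fun w => G k w /\ E k w end).
  assert (HG : forall k, F (G k)). { induction k; simpl; auto. apply F_and; auto. apply HE. }
  assert (HGi : forall k w, G k w <-> forall j, (j < k)%nat -> E j w).
  { induction k; simpl; intros w; split; try (intros; lia); auto.
    - intros [h1 h2] j Hj. destruct (Nat.eq_dec j k). subst; auto. apply IHk; auto; lia.
    - intros h; split. apply IHk; intros; apply h; lia. apply h; lia. }
  set (D := fun k w => ~ E k w /\ G k w).
  assert (HD : forall k, F (D k)). { intros k; apply F_and; auto. apply H2, HE. }
  assert (HDd : forall k l w, k <> l -> D k w -> D l w -> False).
  { intros k l w Hkl [a1 a2] [b1 b2]. pose proof (proj1 (HGi _ _) a2) as a3. pose proof (proj1 (HGi _ _) b2) as b3.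
    destruct (Nat.lt_ge_cases k l). apply a1, b3; auto. apply b1, a3; lia. }
  assert (HD0 : forall k, P (D k) = 0).
  { intros k. pose proof (P_mono F P (D k) (fun w => ~ E k w) HF HP (HD k) (H2 _ (proj1 (HE k))) (fun w h => proj1 h)).
    rewrite (P_compl F P) in H by (auto; apply HE). destruct (HE k) as [_ [HEk _]]; rewrite HEk in H.
    destruct HP as [HP1 _]. pose proof (HP1 _ (HD k)). lra. }
  pose proof HP as [HP1 [HP2 HP3]].
  pose proof (HP3 D HD HDd) as Hc.
  assert (Hc0 : Un_cv (fun N => sum_f_R0 (fun k => P (D k)) N) 0).
  { apply cv_ev with 0%nat; intros n _; induction n; simpl; rewrite ?HD0; try rewrite IHn; auto; ring. }
  pose proof (UL_sequence _ _ _ Hc Hc0) as HU.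
  assert (HUeq : forall w, (exists k, D k w) <-> exists k, ~ E k w).
  { intros w; split. intros [k [h _]]; eauto.
    intros [k Hk]. induction k as [k IH] using (well_founded_induction Wf_nat.lt_wf).
    destruct (classic (forall j, (j < k)%nat -> E j w)) as [h|h].
    - exists k; split; auto. apply HGi; auto.
    - apply not_all_ex_not in h. destruct h as [j hj].
      apply imply_to_and in hj. destruct hj. apply (IH j); auto. }
  rewrite (P_ext P _ _ HUeq) in HU.
  exists (fun w => forall k, E k w). split; [|split].
  - apply (F_ext F (fun w => ~ exists k, ~ E k w)).
    + apply H2. apply H3. intros; apply H2, HE.
    + intros w; split. intros h k; apply NNPP; intros h'; apply h; eauto. intros h [k hk]; auto.
  - rewrite (P_ext P _ (fun w => ~ exists k, ~ E k w)).
    + rewrite (P_compl F P); auto. lra. apply H3; intros; apply H2, HE.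
    + intros w; split. intros h [k hk]; auto. intros h k; apply NNPP; intros h'; apply h; eauto.
  - intros w Hw k. apply (HE k); auto.
Qed.

Lemma as_nonempty {Omega : Type} (F : (Omega -> Prop) -> Prop) (P : (Omega -> Prop) -> R) (Q : Omega -> Prop) :
  sigma_algebra F -> probability_measure F P -> almost_surely F P Q -> exists w, Q w.
Proof.
  intros HF HP [E [HE [HP1 HQ]]]. destruct (classic (exists w, E w)) as [[w Hw]|h]; eauto.
  rewrite (P_ext P E (fun _ => False)) in HP1. rewrite (P_false F P) in HP1; auto; lra.
  intros w; split; auto. intros; apply h; eauto. tauto.
Qed.

Lemma as_and {Omega : Type} (F : (Omega -> Prop) -> Prop) (P : (Omega -> Prop) -> R) (Q1 Q2 : Omega -> Prop) :
  sigma_algebra F -> probability_measure F P -> almost_surely F P Q1 -> almost_surely F P Q2 ->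
  almost_surely F P (fun w => Q1 w /\ Q2 w).
Proof.
  intros HF HP H1 H2.
  destruct (as_forall F P (fun k => if Nat.eqb k 0 then Q1 else Q2) HF HP) as [E [a [b c]]].
  { intros [|k]; simpl; auto. }
  exists E; repeat split; auto. apply (c w H 0%nat). apply (c w H 1%nat).
Qed.
Lemma list_max_spec (l : list R) : l <> [] -> In (list_max l) l /\ forall z, In z l -> z <= list_max l.
Proof.
  destruct l as [|h t]; [congruence|]. intros _. simpl.
  induction t as [|a t IH]; simpl.
  - split; auto. intros z [->|[]]; lra.
  - destruct IH as [I1 I2]. split.
    + set (m := fold_right Rmax h t) in *. destruct (Rle_dec a m); [rewrite Rmax_right by lra | rewrite Rmax_left by lra]; simpl in *; tauto.
    + intros z [<-|[<-|Hz]]. pose proof (I2 h (or_introl eq_refl)); pose proof (Rmax_r a (fold_right Rmax h t)); lra.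
      apply Rmax_l. pose proof (I2 z (or_intror Hz)); pose proof (Rmax_r a (fold_right Rmax h t)); lra.
Qed.

Lemma list_min_spec (l : list R) : l <> [] -> In (list_min l) l /\ forall z, In z l -> list_min l <= z.
Proof.
  destruct l as [|h t]; [congruence|]. intros _. simpl.
  induction t as [|a t IH]; simpl.
  - split; auto. intros z [->|[]]; lra.
  - destruct IH as [I1 I2]. split.
    + set (m := fold_right Rmin h t) in *. destruct (Rle_dec a m); [rewrite Rmin_left by lra | rewrite Rmin_right by lra]; simpl in *; tauto.
    + intros z [<-|[<-|Hz]]. pose proof (I2 h (or_introl eq_refl)); pose proof (Rmin_r a (fold_right Rmin h t)); lra.
      apply Rmin_l. pose proof (I2 z (or_intror Hz)); pose proof (Rmin_r a (fold_right Rmin h t)); lra.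
Qed.

Lemma nil_in_sublists {T : Type} (l : list T) : In [] (sublists l).
Proof. induction l; simpl; auto. apply in_or_app; auto. Qed.

Lemma nil_in_alignments n : In [] (alignments n).
Proof. unfold alignments. apply filter_In; split; auto. apply nil_in_sublists. Qed.

Lemma sumR_lin {T : Type} (l : list T) (f0 f1 f2 : T -> R) (c1 c2 : R) :
  (forall z, f0 z = c1 * f1 z + c2 * f2 z) ->
  sumR (map f0 l) = c1 * sumR (map f1 l) + c2 * sumR (map f2 l).
Proof. intros H; induction l; simpl; [ring|]. rewrite IHl, H; ring. Qed.

Lemma score_comb {A : Type} (R1 R2 : scoring A) (a b : R) n x y nu :
  score (fun u v => a * R1 u v + b * R2 u v) n x y nu = a * score R1 n x y nu + b * score R2 n x y nu.
Proof.
  unfold score.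
  rewrite (sumR_lin nu _ (fun ij => R1 (Some (x (fst ij))) (Some (y (snd ij)))) (fun ij => R2 (Some (x (fst ij))) (Some (y (snd ij)))) a b) by reflexivity.
  rewrite (sumR_lin (seq 1 n) (fun i => if existsb (Nat.eqb i) (map fst nu) then 0 else a * R1 (Some (x i)) None + b * R2 (Some (x i)) None) (fun i => if existsb (Nat.eqb i) (map fst nu) then 0 else R1 (Some (x i)) None) (fun i => if existsb (Nat.eqb i) (map fst nu) then 0 else R2 (Some (x i)) None) a b)
    by (intros z; destruct existsb; ring).
  rewrite (sumR_lin (seq 1 n) (fun j => if existsb (Nat.eqb j) (map snd nu) then 0 else a * R1 None (Some (y j)) + b * R2 None (Some (y j))) (fun j => if existsb (Nat.eqb j) (map snd nu) then 0 else R1 None (Some (y j))) (fun j => if existsb (Nat.eqb j) (map snd nu) then 0 else R2 None (Some (y j))) a b)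
    by (intros z; destruct existsb; ring).
  ring.
Qed.

Lemma L_ge {A : Type} (Rs : scoring A) n x y nu :
  In nu (alignments n) -> score Rs n x y nu <= L_opt Rs n x y.
Proof.
  intros H. unfold L_opt. apply list_max_spec.
  intros He. apply map_eq_nil in He. rewrite He in H; destruct H.
  apply in_map; auto.
Qed.

Lemma L_att {A : Type} (Rs : scoring A) n x y :
  exists nu, In nu (alignments n) /\ score Rs n x y nu = L_opt Rs n x y.
Proof.
  unfold L_opt. destruct (list_max_spec (map (score Rs n x y) (alignments n))) as [H _].
  intros He. apply map_eq_nil in He. pose proof (nil_in_alignments n). rewrite He in H; destruct H.
  apply in_map_iff in H. destruct H as [nu [h1 h2]]; eauto.
Qed.

Lemma opt_spec {A : Type} (S : scoring A) n x y pi :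
  In pi (opt_alignments S n x y) -> In pi (alignments n) /\ score S n x y pi = L_opt S n x y.
Proof.
  unfold opt_alignments. intros H; apply filter_In in H. destruct H as [h1 h2].
  destruct Req_EM_T; [auto|discriminate].
Qed.

Lemma opt_nonempty {A : Type} (S : scoring A) n x y : opt_alignments S n x y <> [].
Proof.
  destruct (L_att S n x y) as [nu [h1 h2]].
  intros He. assert (In nu (opt_alignments S n x y)).
  { unfold opt_alignments; apply filter_In; split; auto. destruct Req_EM_T; auto. }
  rewrite He in H; destruct H.
Qed.

Lemma maxT_att {A : Type} (S T : scoring A) n x y :
  exists pi, In pi (opt_alignments S n x y) /\ max_T_over_opt S T n x y = score T n x y pi / INR n.
Proof.
  unfold max_T_over_opt. destruct (list_max_spec (map (fun pi => score T n x y pi / INR n) (opt_alignments S n x y))) as [H _].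
  intros He; apply map_eq_nil in He; apply (opt_nonempty S n x y He).
  apply in_map_iff in H. destruct H as [pi [h1 h2]]; eauto.
Qed.

Lemma minT_att {A : Type} (S T : scoring A) n x y :
  exists pi, In pi (opt_alignments S n x y) /\ min_T_over_opt S T n x y = score T n x y pi / INR n.
Proof.
  unfold min_T_over_opt. destruct (list_min_spec (map (fun pi => score T n x y pi / INR n) (opt_alignments S n x y))) as [H _].
  intros He; apply map_eq_nil in He; apply (opt_nonempty S n x y He).
  apply in_map_iff in H. destruct H as [pi [h1 h2]]; eauto.
Qed.
Lemma cv_le (u v : nat -> R) (l m : R) (N : nat) :
  (forall n, (N <= n)%nat -> u n <= v n) -> Un_cv u l -> Un_cv v m -> l <= m.
Proof.
  intros H Hu Hv. destruct (Rle_dec l m) as [h|h]; auto. exfalso.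
  set (e := (l - m) / 2).
  destruct (Hu e) as [N1 H1]; [unfold e; lra|].
  destruct (Hv e) as [N2 H2]; [unfold e; lra|].
  set (n := (N + N1 + N2)%nat).
  specialize (H n ltac:(unfold n; lia)). specialize (H1 n ltac:(unfold n; lia)).
  specialize (H2 n ltac:(unfold n; lia)). unfold Rdist in *.
  apply Rabs_def2 in H1. apply Rabs_def2 in H2. unfold e in *. lra.
Qed.

Definition dl (k : nat) : R := / INR (S k).

Lemma dl_pos k : 0 < dl k.
Proof. unfold dl. apply Rinv_0_lt_compat, lt_0_INR; lia. Qed.

Lemma dl_dec k : dl (S k) <= dl k.
Proof. unfold dl. apply Rinv_le_contravar. apply lt_0_INR; lia. apply le_INR; lia. Qed.


Lemma Q1 (g : R -> R)
 (Hc : forall s t mu, 0 <= mu <= 1 -> g (mu*s + (1-mu)*t) <= mu * g s + (1-mu) * g t)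
 s t : 0 < s -> s <= t -> (g s - g 0) / s <= (g t - g 0) / t.
Proof.
  intros Hs Hst. pose proof (Hc t 0 (s / t)) as H.
  assert (E : s / t * t + (1 - s / t) * 0 = s) by (field; lra).
  rewrite E in H.
  assert (Hm : 0 <= s / t <= 1).
  { split. apply Rlt_le, Rdiv_lt_0_compat; lra.
    apply Rmult_le_reg_r with t; [lra|]. unfold Rdiv; rewrite Rmult_assoc, Rinv_l by lra. lra. }
  specialize (H Hm).
  assert (H2 : g s - g 0 <= s / t * (g t - g 0)) by lra.
  apply Rmult_le_reg_r with s; [lra|].
  unfold Rdiv at 1. rewrite Rmult_assoc, Rinv_l by lra. rewrite Rmult_1_r.
  replace ((g t - g 0) / t * s) with (s / t * (g t - g 0)) by (field; lra). lra.
Qed.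

Lemma Q2 (g : R -> R)
 (Hc : forall s t mu, 0 <= mu <= 1 -> g (mu*s + (1-mu)*t) <= mu * g s + (1-mu) * g t)
 s t : t < 0 -> 0 < s -> (g 0 - g t) / (- t) <= (g s - g 0) / s.
Proof.
  intros Ht Hs. pose proof (Hc t s (s / (s - t))) as H.
  assert (E : s / (s - t) * t + (1 - s / (s - t)) * s = 0) by (field; lra).
  rewrite E in H.
  assert (Hm : 0 <= s / (s - t) <= 1).
  { split. apply Rlt_le, Rdiv_lt_0_compat; lra.
    apply Rmult_le_reg_r with (s - t); [lra|]. unfold Rdiv; rewrite Rmult_assoc, Rinv_l by lra. lra. }
  specialize (H Hm).
  assert (H2 : (s - t) * g 0 <= s * g t - t * g s).
  { replace (1 - s / (s - t)) with (- t / (s - t)) in H by (field; lra).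
    apply Rmult_le_compat_l with (r := s - t) in H; [|lra].
    replace ((s - t) * (s / (s - t) * g t + - t / (s - t) * g s)) with (s * g t - t * g s) in H by (field; lra). lra. }
  replace ((g 0 - g t) / - t) with (s * (g 0 - g t) / (s * - t)) by (field; lra).
  replace ((g s - g 0) / s) with (- t * (g s - g 0) / (s * - t)) by (field; lra).
  unfold Rdiv. apply Rmult_le_compat_r. apply Rlt_le, Rinv_0_lt_compat; nra. lra.
Qed.

Lemma convex_right (g : R -> R) (y0 : R)
 (Hc : forall s t mu, 0 <= mu <= 1 -> g (mu*s + (1-mu)*t) <= mu * g s + (1-mu) * g t)
 (Hs : forall D, (forall t, g 0 + t*D <= g t) -> D = y0) :
 Un_cv (fun k => (g (dl k) - g 0) / dl k) y0.
Proof.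
  set (q := fun k => (g (dl k) - g 0) / dl k).
  assert (Hdec : Un_decreasing q).
  { intros k; unfold q. apply Q1; auto. apply dl_pos. apply dl_dec. }
  assert (Hlb : forall k, (g 0 - g (-1)) / (- -1) <= q k).
  { intros k; apply Q2; auto. lra. apply dl_pos. }
  destruct (decreasing_cv q Hdec) as [D HD].
  { exists (- ((g 0 - g (-1)) / (- -1))). intros r [i ->]. unfold opp_seq. specialize (Hlb i). lra. }
  pose proof (decreasing_ineq q D Hdec HD) as HDq.
  replace y0 with D; auto. apply Hs. intros t.
  destruct (Rtotal_order t 0) as [Ht|[Ht|Ht]].
  - assert (HL : (g 0 - g t) / (- t) <= D).
    { apply (cv_le (fun _ => (g 0 - g t) / (- t)) q _ _ 0%nat); auto.
      intros n _; apply Q2; auto. apply dl_pos. intros e He; exists 0%nat; intros; unfold Rdist; rewrite Rminus_diag, Rabs_R0; lra. }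
    apply Rmult_le_compat_l with (r := - t) in HL; [|lra].
    replace (- t * ((g 0 - g t) / - t)) with (g 0 - g t) in HL by (field; lra). lra.
  - subst. lra.
  - destruct (archimed_cor1 t Ht) as [N [HN1 HN2]].
    destruct N as [|N]; [lia|].
    assert (D <= (g t - g 0) / t).
    { apply Rle_trans with (q N). auto. unfold q. apply Q1; auto. apply dl_pos. unfold dl; lra. }
    apply Rmult_le_compat_l with (r := t) in H; [|lra].
    replace (t * ((g t - g 0) / t)) with (g t - g 0) in H by (field; lra). lra.
Qed.

Lemma convex_left (g : R -> R) (y0 : R)
 (Hc : forall s t mu, 0 <= mu <= 1 -> g (mu*s + (1-mu)*t) <= mu * g s + (1-mu) * g t)
 (Hs : forall D, (forall t, g 0 + t*D <= g t) -> D = y0) :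
 Un_cv (fun k => (g 0 - g (- dl k)) / dl k) y0.
Proof.
  pose proof (convex_right (fun t => g (- t)) (- y0)) as H.
  assert (H1 : Un_cv (fun k => (g (- dl k) - g (- 0)) / dl k) (- y0)).
  { apply H.
    - intros s t mu Hmu. replace (- (mu * s + (1 - mu) * t)) with (mu * (-s) + (1-mu) * (-t)) by ring. auto.
    - intros D HD. enough (- D = y0) by lra. apply Hs. intros t.
      specialize (HD (- t)). cbv beta in HD. rewrite Ropp_0, Ropp_involutive in HD. replace (t * - D) with (- t * D) by ring. exact HD. }
  rewrite Ropp_0 in H1.
  apply CV_opp in H1. rewrite Ropp_involutive in H1.
  intros e He; destruct (H1 e He) as [N HN]; exists N; intros n Hn; specialize (HN n Hn).
  unfold opp_seq in HN. replace ((g 0 - g (- dl n)) / dl n) with (- ((g (- dl n) - g 0) / dl n)). auto.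
  field. apply Rgt_not_eq, dl_pos.
Qed.

Definition comb {A : Type} (S T : scoring A) (a b : R) : scoring A := fun u v => a * S u v + b * T u v.

Lemma comb_sym {A : Type} (S T : scoring A) a b :
  symmetric_scoring S -> symmetric_scoring T -> symmetric_scoring (comb S T a b).
Proof.
  intros [S1 S2] [T1 T2]; split; unfold comb.
  - intros u v; rewrite S1, T1; auto.
  - rewrite S2, T2; ring.
Qed.

Lemma score_comb' {A : Type} (S T : scoring A) a b n x y nu :
  score (comb S T a b) n x y nu = a * score S n x y nu + b * score T n x y nu.
Proof. unfold comb; apply score_comb. Qed.

Lemma div_le (x y n : R) : 0 < n -> x <= y -> x / n <= y / n.
Proof. intros; unfold Rdiv; apply Rmult_le_compat_r; auto. apply Rlt_le, Rinv_0_lt_compat; auto. Qed.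

Lemma INR_pos (n : nat) : (1 <= n)%nat -> 0 < INR n.
Proof. intros; apply lt_0_INR; lia. Qed.

Lemma lam_le {A Omega : Type} (F : (Omega -> Prop) -> Prop) (P : (Omega -> Prop) -> R)
  (X Y : nat -> Omega -> A) (lam : scoring A -> R) (S T : scoring A)
  (HF : sigma_algebra F) (HP : probability_measure F P) (Hlam : is_lambda F P X Y lam)
  (HS : symmetric_scoring S) (HT : symmetric_scoring T)
  a0 b0 a1 b1 a2 b2 c1 c2 :
  0 <= c1 -> 0 <= c2 -> a0 = c1 * a1 + c2 * a2 -> b0 = c1 * b1 + c2 * b2 ->
  lam (comb S T a0 b0) <= c1 * lam (comb S T a1 b1) + c2 * lam (comb S T a2 b2).
Proof.
  intros Hc1 Hc2 Ha Hb.
  pose proof (fun a b => Hlam (comb S T a b) (comb_sym S T a b HS HT)) as H.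
  destruct (as_nonempty F P _ HF HP (as_and F P _ _ HF HP (H a0 b0) (as_and F P _ _ HF HP (H a1 b1) (H a2 b2))))
    as [w [C0 [C1 C2]]].
  set (xs := fun i => X i w) in *. set (ys := fun i => Y i w) in *.
  apply (cv_le (fun n => L_opt (comb S T a0 b0) n xs ys / INR n) (fun n => c1 * (L_opt (comb S T a1 b1) n xs ys / INR n) + c2 * (L_opt (comb S T a2 b2) n xs ys / INR n)) _ _ 1%nat); auto.
  - intros n Hn. destruct (L_att (comb S T a0 b0) n xs ys) as [nu [Hin Hsc]].
    rewrite <- Hsc. rewrite score_comb'.
    pose proof (L_ge (comb S T a1 b1) n xs ys nu Hin) as G1. pose proof (L_ge (comb S T a2 b2) n xs ys nu Hin) as G2.
    rewrite score_comb' in G1, G2.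
    assert (a0 * score S n xs ys nu + b0 * score T n xs ys nu <= c1 * L_opt (comb S T a1 b1) n xs ys + c2 * L_opt (comb S T a2 b2) n xs ys).
    { subst a0 b0. apply Rmult_le_compat_l with (r := c1) in G1; auto. apply Rmult_le_compat_l with (r := c2) in G2; auto. lra. }
    apply div_le with (n := INR n) in H0; [|apply INR_pos; auto].
    unfold Rdiv in *. lra.
  - apply CV_plus; apply CV_mult; auto; apply cv_const.
Qed.

Lemma lam_ge {A Omega : Type} (F : (Omega -> Prop) -> Prop) (P : (Omega -> Prop) -> R)
  (X Y : nat -> Omega -> A) (lam : scoring A -> R) (S T : scoring A)
  (HF : sigma_algebra F) (HP : probability_measure F P) (Hlam : is_lambda F P X Y lam)
  (HS : symmetric_scoring S) (HT : symmetric_scoring T)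
  a0 b0 a1 b1 c :
  0 <= c -> a0 = c * a1 -> b0 = c * b1 ->
  c * lam (comb S T a1 b1) <= lam (comb S T a0 b0).
Proof.
  intros Hc Ha Hb.
  pose proof (fun a b => Hlam (comb S T a b) (comb_sym S T a b HS HT)) as H.
  destruct (as_nonempty F P _ HF HP (as_and F P _ _ HF HP (H a0 b0) (H a1 b1)))
    as [w [C0 C1]].
  set (xs := fun i => X i w) in *. set (ys := fun i => Y i w) in *.
  apply (cv_le (fun n => c * (L_opt (comb S T a1 b1) n xs ys / INR n)) (fun n => L_opt (comb S T a0 b0) n xs ys / INR n) _ _ 1%nat); auto.
  - intros n Hn. destruct (L_att (comb S T a1 b1) n xs ys) as [nu [Hin Hsc]].
    rewrite <- Hsc. rewrite score_comb'.
    pose proof (L_ge (comb S T a0 b0) n xs ys nu Hin) as G0.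
    rewrite score_comb' in G0. subst a0 b0.
    assert (c * (a1 * score S n xs ys nu + b1 * score T n xs ys nu) <= L_opt (comb S T (c * a1) (c * b1)) n xs ys) by lra.
    apply div_le with (n := INR n) in H0; [|apply INR_pos; auto].
    unfold Rdiv in *. lra.
  - apply CV_mult; auto; apply cv_const.
Qed.

Theorem mainTheorem9
  (A : Type) (enumA : list A) (HA : finite_alphabet enumA)
  (p : A -> R) (Hp : distribution enumA p)
  (Omega : Type) (F : (Omega -> Prop) -> Prop) (P : (Omega -> Prop) -> R)
  (HF : sigma_algebra F) (HP : probability_measure F P)
  (X Y : nat -> Omega -> A) (Hiid : iid_letters F P p X Y)
  (lam : scoring A -> R) (Hlam : is_lambda F P X Y lam)
  (S T : scoring A) (HS : symmetric_scoring S) (HT : symmetric_scoring T)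
  (x0 y0 : R)
  (Hmax : SET lam S T x0 y0 /\
          (forall x y, SET lam S T x y -> x <= x0 /\ (x = x0 -> y = y0))) :
  almost_surely F P (fun w =>
    Un_cv (fun n => max_T_over_opt S T n (fun i => X i w) (fun i => Y i w)) y0 /\
    Un_cv (fun n => min_T_over_opt S T n (fun i => X i w) (fun i => Y i w)) y0).
Proof.
  set (g := fun t => lam (comb S T 1 t)).
  pose proof (lam_le F P X Y lam S T HF HP Hlam HS HT) as LE.
  pose proof (lam_ge F P X Y lam S T HF HP Hlam HS HT) as GE.
  assert (Hc : forall s t mu, 0 <= mu <= 1 -> g (mu*s + (1-mu)*t) <= mu * g s + (1-mu) * g t).
  { intros s t mu Hmu. unfold g. apply LE; try lra; ring. }
  assert (Hs : forall D, (forall t, g 0 + t*D <= g t) -> D = y0).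
  { intros D HD. destruct Hmax as [H1 H2].
    assert (Hset : SET lam S T (g 0) D).
    { intros a b. change (a * g 0 + b * D <= lam (comb S T a b)).
      assert (H0b : g b - g 0 <= lam (comb S T 0 b)).
      { assert (g b <= 1 * g 0 + 1 * lam (comb S T 0 b)) by (unfold g; apply LE; lra). lra. }
      destruct (Rle_dec a 0) as [Ha|Ha].
      - assert (E1 : lam (comb S T 0 b) <= 1 * lam (comb S T a b) + 1 * lam (comb S T (-a) 0)) by (apply LE; lra).
        assert (E2 : lam (comb S T (-a) 0) <= (-a) * g 0 + 0 * lam (comb S T 0 0)) by (unfold g; apply LE; lra).
        specialize (HD b). lra.
      - assert (E1 : a * g (b / a) <= lam (comb S T a b)) by (unfold g; apply GE; [lra|ring|field; lra]).
        specialize (HD (b / a)).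
        apply Rmult_le_compat_l with (r := a) in HD; [|lra].
        replace (a * (g 0 + b / a * D)) with (a * g 0 + b * D) in HD by (field; lra). lra. }
    destruct (H2 _ _ Hset) as [h1 h2]. apply h2.
    specialize (H1 1 0). change (1 * x0 + 0 * y0 <= g 0) in H1. lra. }
  pose proof (convex_right g y0 Hc Hs) as CR.
  pose proof (convex_left g y0 Hc Hs) as CL.
  pose proof (fun a b => Hlam (comb S T a b) (comb_sym S T a b HS HT)) as H.
  assert (Hall : almost_surely F P (fun w => forall k,
     Un_cv (fun n => L_opt (comb S T 1 0) n (fun i => X i w) (fun i => Y i w) / INR n) (g 0) /\
     Un_cv (fun n => L_opt (comb S T 1 (dl k)) n (fun i => X i w) (fun i => Y i w) / INR n) (g (dl k)) /\
     Un_cv (fun n => L_opt (comb S T 1 (- dl k)) n (fun i => X i w) (fun i => Y i w) / INR n) (g (- dl k)))).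
  { apply as_forall; auto. intros k. apply as_and; auto. apply as_and; auto. }
  destruct Hall as [E [HE1 [HE2 HE3]]]. exists E; split; auto; split; auto.
  intros w Hw. specialize (HE3 w Hw).
  set (xs := fun i => X i w) in *. set (ys := fun i => Y i w) in *.
  assert (L0eq : forall n, L_opt (comb S T 1 0) n xs ys = L_opt S n xs ys).
  { intros n; unfold L_opt. f_equal. apply map_ext. intros nu. rewrite score_comb'. ring. }
  assert (SAND : forall v : nat -> R,
     (forall n, exists pi, In pi (opt_alignments S n xs ys) /\ v n = score T n xs ys pi / INR n) ->
     Un_cv v y0).
  { intros v Hv e He.
    destruct (CR (e/2) ltac:(lra)) as [K1 HK1]. destruct (CL (e/2) ltac:(lra)) as [K2 HK2].
    set (k := (K1 + K2)%nat). specialize (HK1 k ltac:(unfold k; lia)). specialize (HK2 k ltac:(unfold k; lia)).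
    unfold Rdist in HK1, HK2. apply Rabs_def2 in HK1. apply Rabs_def2 in HK2.
    destruct (HE3 k) as [C0 [Cp Cm]].
    set (d := dl k). assert (Hd : 0 < d) by apply dl_pos. fold d in HK1, HK2, Cp, Cm.
    assert (CU : Un_cv (fun n => (L_opt (comb S T 1 d) n xs ys / INR n - L_opt (comb S T 1 0) n xs ys / INR n) * / d) ((g d - g 0) * / d)).
    { apply CV_mult. apply CV_minus; auto. apply cv_const. }
    assert (CW : Un_cv (fun n => (L_opt (comb S T 1 0) n xs ys / INR n - L_opt (comb S T 1 (- d)) n xs ys / INR n) * / d) ((g 0 - g (- d)) * / d)).
    { apply CV_mult. apply CV_minus; auto. apply cv_const. }
    destruct (CU (e/2) ltac:(lra)) as [N1 HN1]. destruct (CW (e/2) ltac:(lra)) as [N2 HN2].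
    exists (N1 + N2 + 1)%nat. intros n Hn.
    assert (n >= N1)%nat by (clear - Hn; lia). assert (n >= N2)%nat by (clear - Hn; lia). specialize (HN1 n ltac:(assumption)). specialize (HN2 n ltac:(assumption)).
    unfold Rdist in HN1, HN2. apply Rabs_def2 in HN1. apply Rabs_def2 in HN2.
    destruct (Hv n) as [pi [Hpi ->]].
    destruct (opt_spec S n xs ys pi Hpi) as [Hin Hsc].
    pose proof (L_ge (comb S T 1 d) n xs ys pi Hin) as Gp.
    pose proof (L_ge (comb S T 1 (- d)) n xs ys pi Hin) as Gm.
    rewrite score_comb', Hsc in Gp, Gm. rewrite L0eq in HN1, HN2.
    set (Lp := L_opt (comb S T 1 d) n xs ys) in *.
    set (Lm := L_opt (comb S T 1 (- d)) n xs ys) in *.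
    set (L0 := L_opt S n xs ys) in *.
    set (sT := score T n xs ys pi) in *.
    assert (Hn0 : 0 < INR n) by (apply INR_pos; clear - Hn; lia).
    assert (U : sT / INR n <= (Lp / INR n - L0 / INR n) * / d).
    { replace ((Lp / INR n - L0 / INR n) * / d) with ((Lp - L0) / d / INR n) by (field; lra).
      apply div_le; auto. apply Rmult_le_reg_r with d; auto. unfold Rdiv; rewrite Rmult_assoc, Rinv_l by lra. lra. }
    assert (W : (L0 / INR n - Lm / INR n) * / d <= sT / INR n).
    { replace ((L0 / INR n - Lm / INR n) * / d) with ((L0 - Lm) / d / INR n) by (field; lra).
      apply div_le; auto. apply Rmult_le_reg_r with d; auto. unfold Rdiv; rewrite Rmult_assoc, Rinv_l by lra. lra. }
    unfold Rdiv in HK1, HK2. apply Rabs_def1; lra. }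
  split; apply SAND; intros n; [apply maxT_att | apply minT_att].
Qed.
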